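(* For every $n\ge1$: if $\pi\in\mathfrak{S}_n(312)$ then $\mathsf{adi}\,\pi=(2\text{-}13)\pi$; and if $\pi\in\mathfrak{S}_n(231)$ then $\mathsf{adi}^*\,\pi=(13\text{-}2)\pi$.
   Context: $\mathfrak{S}_n(\tau)$: permutations of $[n]$ avoiding the classical pattern $\tau$. $(2\text{-}13)\pi=\#\{(i,j):j<i<n,\ \pi(i)<\pi(j)<\pi(i+1)\}$; $(13\text{-}2)\pi=\#\{(i,j):i+1<j\le n,\ \pi(i)<\pi(j)<\pi(i+1)\}$. Admissible inversions: set $\pi(n+1)=0$; an inversion pair $(\pi(i),\pi(j))$ ($1\le i<j\le n$, $\pi(i)>\pi(j)$) is admissible if $\pi(j)<\pi(j+1)$ or there is $l$ with $i<l<j$ and $\pi(l)<\pi(j)$; $\mathsf{adi}\,\pi$ counts them. Star admissible: set $\pi(0)=n+1$; an inversion pair $(\pi(i),\pi(j))$ with $i<j$ is star admissible if $\pi(i-1)<\pi(i)$ or there is $l$ with $i<l<j$ and $\pi(l)>\pi(i)$; $\mathsf{adi}^*\,\pi$ counts them. *)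

(* Defs.v *)
From mathcomp Require Import all_boot all_fingroup.
Set Implicit Arguments. Unset Strict Implicit. Unset Printing Implicit Defensive.

(* Permutations of [n] are modelled as s : 'S_n (permutations of 'I_n = {0..n-1}).
   We use 1-based positions and values: pv s i = s(i-1) + 1 for 1 <= i <= n. *)
Definition pv n (s : 'S_n) (i : nat) : nat :=
  match insub i.-1 with Some k => (s k).+1 | None => 0 end.

(* value with the sentinel pi(n+1) = 0 (positions outside 1..n give 0) *)
Definition pv0 n (s : 'S_n) (i : nat) : nat :=
  if (1 <= i <= n) then pv s i else 0.

(* value with the sentinel pi(0) = n+1 *)
Definition pvS n (s : 'S_n) (i : nat) : nat :=
  if i == 0 then n.+1 else pv s i.

Definition avoids312 n (s : 'S_n) : bool :=
  [forall i : 'I_n, forall j : 'I_n, forall k : 'I_n,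
     ~~ [&& i < j, j < k & s j < s k < s i]].
Definition avoids231 n (s : 'S_n) : bool :=
  [forall i : 'I_n, forall j : 'I_n, forall k : 'I_n,
     ~~ [&& i < j, j < k & s k < s i < s j]].

Definition pat2_13 n (s : 'S_n) : nat :=
  \sum_(1 <= i < n) \sum_(1 <= j < i)
     ((pv s i < pv s j) && (pv s j < pv s i.+1)).

Definition pat13_2 n (s : 'S_n) : nat :=
  \sum_(1 <= i < n.+1) \sum_(i.+2 <= j < n.+1)
     ((pv s i < pv s j) && (pv s j < pv s i.+1)).

Definition adi n (s : 'S_n) : nat :=
  \sum_(1 <= i < n.+1) \sum_(i.+1 <= j < n.+1)
     [&& pv s j < pv s i &
        (pv0 s j < pv0 s j.+1) || [exists l : 'I_n.+1, (i < l < j) && (pv s l < pv s j)]].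

Definition adi_star n (s : 'S_n) : nat :=
  \sum_(1 <= i < n.+1) \sum_(i.+1 <= j < n.+1)
     [&& pv s j < pv s i &
        (pvS s i.-1 < pvS s i) || [exists l : 'I_n.+1, (i < l < j) && (pv s i < pv s l)]].

(* Main.v *)
Require Import Defs.
From mathcomp Require Import all_boot all_fingroup zify.
Set Implicit Arguments. Unset Strict Implicit. Unset Printing Implicit Defensive.

Lemma exch (F : nat -> nat -> nat) N :
  \sum_(1 <= i < N) \sum_(i.+1 <= j < N) F i j = \sum_(1 <= j < N) \sum_(1 <= i < j) F i j.
Proof.
elim: N => [|N IH]; first by rewrite !big_geq.
case: N IH => [|N] IH; first by rewrite !big_geq.
rewrite [LHS]big_nat_recr //= [RHS]big_nat_recr //= [X in _ + X = _]big_geq // addn0 -IH.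
rewrite -big_split /=; apply: eq_big_nat => i /andP[_ hi]; rewrite big_nat_recr //.
Qed.

Lemma pvE n (s : 'S_n) i (H : i.-1 < n) : pv s i = (s (Ordinal H)).+1.
Proof.
rewrite /pv; case: insubP => [k _ hk|]; last by rewrite H.
by congr (_.+1); congr (s _); apply: val_inj.
Qed.

Lemma pv0out n (s : 'S_n) i : n < i -> pv s i = 0.
Proof. by move=> h; rewrite /pv; case: insubP => [k hk _|//]; lia. Qed.

Lemma pvS_pv n (s : 'S_n) j : pv0 s j.+1 = pv s j.+1.
Proof. rewrite /pv0; case: ifP => // /negbT; rewrite negb_and /= -ltnNge => h; by rewrite pv0out. Qed.

Lemma pv_inj n (s : 'S_n) a b : 1 <= a <= n -> 1 <= b <= n -> pv s a = pv s b -> a = b.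
Proof.
move=> /andP[a1 an] /andP[b1 bn].
have ha : a.-1 < n by lia. have hb : b.-1 < n by lia.
rewrite (pvE s ha) (pvE s hb) => h; have := congr1 val (perm_inj (val_inj (succn_inj h))) => /=; lia.
Qed.

Lemma av312 n (s : 'S_n) a b c : avoids312 s -> 1 <= a -> a < b -> b < c -> c <= n ->
  ~~ (pv s b < pv s c < pv s a).
Proof.
move=> A a1 ab bc cn.
have ha : a.-1 < n by lia. have hb : b.-1 < n by lia. have hc : c.-1 < n by lia.
move/forallP: A => /(_ (Ordinal ha))/forallP/(_ (Ordinal hb))/forallP/(_ (Ordinal hc)).
rewrite (pvE s ha) (pvE s hb) (pvE s hc) !ltnS /=.
have -> : (a.-1 < b.-1) = true by apply/idP; lia.
by have -> : (b.-1 < c.-1) = true by apply/idP; lia.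
Qed.

Lemma av231 n (s : 'S_n) a b c : avoids231 s -> 1 <= a -> a < b -> b < c -> c <= n ->
  ~~ (pv s c < pv s a < pv s b).
Proof.
move=> A a1 ab bc cn.
have ha : a.-1 < n by lia. have hb : b.-1 < n by lia. have hc : c.-1 < n by lia.
move/forallP: A => /(_ (Ordinal ha))/forallP/(_ (Ordinal hb))/forallP/(_ (Ordinal hc)).
rewrite (pvE s ha) (pvE s hb) (pvE s hc) !ltnS /=.
have -> : (a.-1 < b.-1) = true by apply/idP; lia.
by have -> : (b.-1 < c.-1) = true by apply/idP; lia.
Qed.

Lemma pv_le n (s : 'S_n) i : pv s i <= n.
Proof. by rewrite /pv; case: insubP => [k _ _|//]; apply: ltn_ord. Qed.

Theorem lemma3p4 (n : nat) (s : 'S_n) : 1 <= n ->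
  (avoids312 s -> adi s = pat2_13 s) /\ (avoids231 s -> adi_star s = pat13_2 s).
Proof.
move=> n1; split=> A.
- rewrite /adi /pat2_13.
  transitivity (\sum_(1 <= i < n.+1) \sum_(i.+1 <= j < n.+1) ((pv s j < pv s i) && (pv s i < pv s j.+1)) : nat).
    apply: eq_big_nat => i /andP[i1 iN]; apply: eq_big_nat => j /andP[ij jN].
    have pj : pv0 s j = pv s j by rewrite /pv0; have -> : (1 <= j <= n) by lia.
    rewrite pvS_pv pj.
    case h: (pv s j < pv s i) => //=.
    have ex : [exists l : 'I_n.+1, (i < l < j) && (pv s l < pv s j)] = false.
      apply/negbTE/existsPn => l; apply/negP => /andP[/andP[il lj] lt].
      by move: (av312 A i1 il lj (ltnSE jN)); rewrite lt h.
    rewrite ex orbF.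
    case: (ltnP j n) => jn; last first.
      have jn' : j = n by lia.
      by rewrite (pv0out s (_ : n < j.+1)) ?ltn0 //; lia.
    have nav := av312 A i1 ij (ltnSn j) jn.
    have neq : pv s i <> pv s j.+1 by move/pv_inj; lia.
    move: h nav neq; set x := pv s i; set y := pv s j; set z := pv s j.+1.
    move=> h nav neq; clearbody x y z; case: (ltnP y z) => ?; case: (ltnP x z) => ? //; lia.
  rewrite exch.
  case: n n1 s A => [//|m] _ s A.
  rewrite big_nat_recr //= [X in _ + X]big1_seq ?addn0; last first.
    move=> i /andP[_]; rewrite mem_index_iota => _.
    by rewrite (pv0out s (ltnSn m.+1)) ltn0 andbF.
  apply: eq_big_nat => j _; apply: eq_big_nat => i _.
  by [].
- rewrite /adi_star /pat13_2.
  transitivity (\sum_(1 <= i < n.+1) \sum_(i.+1 <= j < n.+1) ((1 < i) && (pv s i.-1 < pv s j < pv s i)) : nat).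
    apply: eq_big_nat => i /andP[i1 iN]; apply: eq_big_nat => j /andP[ij jN].
    case h: (pv s j < pv s i) => /=; last first.
      by rewrite ?andbF.
    have ex : [exists l : 'I_n.+1, (i < l < j) && (pv s i < pv s l)] = false.
      apply/negbTE/existsPn => l; apply/negP => /andP[/andP[il lj] lt].
      by move: (av231 A i1 il lj (ltnSE jN)); rewrite lt h.
    rewrite ex orbF /pvS.
    case: (ltnP 1 i) => i2 /=; last first.
      have -> : i = 1 by lia.
      by have := pv_le s 1; rewrite /=; lia.
    have -> : (i.-1 == 0) = false by apply/negbTE; lia.
    have -> : (i == 0) = false by apply/negbTE; lia.
    have nav := av231 A (_ : 1 <= i.-1) (_ : i.-1 < i) ij (ltnSE jN).
    have neq : pv s i.-1 <> pv s j by move/pv_inj; lia.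
    move: h neq; have := nav ltac:(lia) ltac:(lia).
    set x := pv s i.-1; set y := pv s j; set z := pv s i.
    move=> nv h neq; clearbody x y z; case: (ltnP x z) => ?; case: (ltnP x y) => ? //=; lia.
  rewrite big_ltn // big1_seq ?add0n; last first.
    by move=> j _; rewrite ltnn.
  rewrite big_add1 /=.
  rewrite [RHS]big_nat_recr //= [X in _ = _ + X]big_geq // addn0.
  apply: eq_big_nat => a /andP[a1 _]; apply: eq_big_nat => j _.
  by rewrite ltnS a1.
Qed.
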